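(* Let $\varphi:\mathbb{R}\to\mathbb{R}_+$ be convex and twice differentiable, and suppose $\beta_\varphi>0$ satisfies $[\varphi'(x)]^2\le\beta_\varphi\varphi''(x)$ for all $|x|\le1$. Then for any $\beta\ge\beta_\varphi$, the aggregate classifier $\tilde h_n(x)=\hat\theta_n^\top H(x)$, where $\hat\theta_n$ is the mirror averaging aggregate with parameter $\beta$, satisfies $$E_n\varphi(-Y_n\tilde h_n(X_n))\le\min_{1\le j\le M}E\varphi(-Yh_j(X))+\frac{\beta\log M}{n}.$$
   Context: $(\mathcal{X},\mathcal{F})$ is a measurable space; $(X,Y)$ is a random pair with $X\in\mathcal{X}$, $Y\in\{-1,1\}$; $(X_1,Y_1),\dots,(X_n,Y_n)$ are i.i.d. copies of $(X,Y)$, $E_n$ is expectation w.r.t. them. $h_1,\dots,h_M:\mathcal{X}\to[-1,1]$ are fixed classifiers ($M\ge2$), $H(x)=(h_1(x),\dots,h_M(x))^\top$. $\Theta$ is the simplex in $\mathbb{R}^M$, $e_j$ the unit vectors. Loss: $Q((x,y),\theta)=\varphi(-y\theta^\top H(x))$. Mirror averaging aggregate with parameter $\beta$, with $Z_i=(X_i,Y_i)$: $\zeta_0=0$, $\zeta_i=\zeta_{i-1}+u_i$ ($i=1,\dots,n-1$), $u_i=(Q(Z_i,e_1),\dots,Q(Z_i,e_M))^\top$; $\theta_i^{(j)}=e^{-\zeta_i^{(j)}/\beta}/\sum_ke^{-\zeta_i^{(k)}/\beta}$ for $i=0,\dots,n-1$; $\hat\theta_n=\frac1n\sum_{i=1}^n\theta_{i-1}$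 (a function of $Z_1,\dots,Z_{n-1}$). *)

(* Defs.v *)
From HB Require Import structures.
From mathcomp Require Import all_boot all_order all_algebra.
From mathcomp Require Import all_classical all_reals all_analysis.
Set Implicit Arguments. Unset Strict Implicit. Unset Printing Implicit Defensive.
Import Order.TTheory GRing.Theory Num.Theory.
Local Open Scope ring_scope.
Local Open Scope classical_set_scope.

(* A labeled observation z = (x, b); the label y in {-1,1} is encoded by a
   boolean: y = 1 if b = true, y = -1 if b = false. *)
Definition lab {R : realType} (b : bool) : R := if b then 1 else -1.

Section Defs.
Context {R : realType} {d : measure_display} {T : measurableType d}.
Context (phi : R -> R) (M : nat) (h : 'I_M -> T -> R) (beta : R).

Definition lossj (j : 'I_M) (z : T * bool) : R := phi (- lab z.2 * h j z.1).

Definition zeta (s : seq (T * bool)) (j : 'I_M) : R :=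
  \sum_(z <- s) lossj j z.

Definition theta_w (s : seq (T * bool)) (j : 'I_M) : R :=
  expR (- zeta s j / beta) / \sum_(k < M) expR (- zeta s k / beta).

(* hat theta_n = (1/n) sum_{i=1}^n theta_{i-1}, computed from the sample
   s = [:: Z_1; ...; Z_(n-1)] (only its first n-1 entries are used). *)
Definition theta_hat (n : nat) (s : seq (T * bool)) (j : 'I_M) : R :=
  n%:R^-1 * \sum_(i < n) theta_w (take i s) j.

Definition h_agg (n : nat) (s : seq (T * bool)) (x : T) : R :=
  \sum_(j < M) theta_hat n s j * h j x.

End Defs.

(* E_n: expectation over n i.i.d. observations with common law P, written as
   the iterated integral over z_1, ..., z_n (integrands here are nonnegative). *)
Fixpoint iter_expect {R : realType} {d : measure_display} {A : measurableType d}
  (P : probability A R) (n : nat) (f : seq A -> \bar R) : \bar R :=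
  match n with
  | 0 => f [::]
  | k.+1 => (\int[P]_z iter_expect P k (fun s => f (z :: s)))%E
  end.

(* phi(-Y_n tilde h_n(X_n)) as a function of the sample s = [:: Z_1; ...; Z_n]
   (Z_n is the last entry; tilde h_n only uses the first n-1 entries). *)
Definition agg_loss {R : realType} {d : measure_display} {T : measurableType d}
  (phi : R -> R) (M : nat) (h : 'I_M -> T -> R) (beta : R) (n : nat)
  (s : seq (T * bool)) : R :=
  match s with
  | [::] => 0
  | z0 :: s' => let zn := last z0 s' in
      phi (- lab zn.2 * h_agg phi h beta n s zn.1)
  end.

(* Main.v *)
Require Import Defs.
From HB Require Import structures.
From mathcomp Require Import all_boot all_order all_algebra.
From mathcomp Require Import all_classical all_reals all_analysis.
From mathcomp Require Import ring lra.
From mathcomp Require Import measurable_realfun.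
Import Order.TTheory GRing.Theory Num.Theory.
Local Open Scope ring_scope.
Local Open Scope classical_set_scope.
Section Calc.
Context {R : realType}.

Lemma psi_concave_aux (phi : R -> R) (beta bp : R) :
  (forall x, derivable phi x 1) -> (forall x, derivable (derive1 phi) x 1) ->
  0 < bp -> bp <= beta ->
  (forall x, `|x| <= 1 -> derive1 phi x ^+ 2 <= bp * derive1n 2 phi x) ->
  forall a b : R^o, -1 <= a -> b <= 1 -> a <= b -> forall t : {i01 R},
  - expR (- phi (t%:num * a + (1 - t%:num) * b) / beta) <=
  t%:num * (- expR (- phi a / beta)) + (1 - t%:num) * (- expR (- phi b / beta)).
Proof.
move=> d1 d2 bp0 bpb hc a b a1 b1 ab t.
have b0 : 0 < beta by apply: lt_le_trans bpb.
set f := (fun x => - expR (- phi x / beta)).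
set D1 := 'D_1 phi.
have Hd1 (x : R) : is_derive x 1 phi (D1 x) by exact: derivableP.
have dD1 : derive1 phi = D1 by apply/funext => y; rewrite derive1E.
have Hd2 (x : R) : is_derive x 1 D1 ('D_1 D1 x) by apply: derivableP; rewrite -dD1.
set g := fun x => - phi x / beta.
have Hg (x : R) : is_derive x 1 g (- D1 x / beta).
  have H := is_deriveZ (- beta^-1) (Hd1 x).
  have -> : g = (- beta^-1) \*: phi.
    apply/funext => y; rewrite /g /=. change (- phi y / beta = (- beta^-1) * phi y). by rewrite !mulNr mulrC.
  apply: (is_derive_eq H). change ((- beta^-1) * D1 x = - D1 x / beta). by rewrite !mulNr mulrC.
pose F1 := fun x => expR (g x) * (beta^-1 * D1 x).
have Hf (x : R) : is_derive x 1 f (F1 x).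
  have H := is_deriveN (is_derive1_comp (is_derive_expR (g x)) (Hg x)).
  have -> : f = - (expR \o g) by apply/funext.
  by apply: (is_derive_eq H); rewrite /F1 mulNr mulrN opprK [D1 x * _]mulrC.
have DF : 'D_1 f = F1 by apply/funext => y; exact: derive_val.
have HF1 (x : R) : is_derive x 1 F1 (expR (g x) * ('D_1 D1 x / beta - (D1 x / beta) ^+ 2)).
  have H1 := is_derive1_comp (is_derive_expR (g x)) (Hg x).
  have H2 := is_deriveZ (beta^-1) (Hd2 x).
  have H := is_deriveM H1 H2.
  apply: (is_derive_eq (f := F1) H). rewrite /= /g.
  change (expR (- phi x / beta) * (beta^-1 * 'D_1 D1 x) + (beta^-1 * D1 x) * (expR (- phi x / beta) * (- D1 x / beta)) = expR (- phi x / beta) * ('D_1 D1 x / beta - (D1 x / beta) ^+ 2)).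
  by field; exact: lt0r_neq0.
have cf (x : R^o) : {for x, continuous (f : R^o -> R^o)}.
  by apply: differentiable_continuous; apply/derivable1_diffP; apply: ex_derive; exact: Hf.
have H1 : forall x, a < x < b -> 0 <= 'D_1 ('D_1 (f : R -> R^o)) x.
  move=> x /andP[ax xb]; rewrite DF (@derive_val _ _ _ _ _ _ _ (HF1 x)).
  apply: mulr_ge0; first exact: ltW (expR_gt0 _).
  have x1 : `|x| <= 1 by rewrite ler_norml; apply/andP; split; lra.
  have := hc x x1; rewrite /derive1n /= !dD1 derive1E => hx.
  have D2ge0 : 0 <= 'D_1 D1 x.
    rewrite -(pmulr_rge0 _ bp0); apply: le_trans hx; exact: sqr_ge0.
  have e1 : (D1 x / beta) ^+ 2 = D1 x ^+ 2 / beta / beta.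
    by rewrite expr_div_n expr2 invfM mulrA.
  rewrite subr_ge0 e1 ler_pM2r ?invr_gt0 // ler_pdivrMr //; apply: le_trans hx _.
  by rewrite [_ * beta]mulrC ler_wpM2r.
have H2 : (f : R -> R^o) x @[x --> b^'-] --> f b by exact/cvg_at_left_filter/cf.
have H3 : (f : R -> R^o) x @[x --> a^'+] --> f a by exact/cvg_at_right_filter/cf.
have H4 : {in `]a, b[%R, forall x, derivable (f : R -> R^o) x 1}.
  by move=> x _; apply: ex_derive; exact: Hf.
have H5 : {in `]a, b[%R, forall x, derivable ('D_1 (f : R -> R^o)) x 1}.
  by move=> x _; rewrite DF; apply: ex_derive; exact: HF1.
have := second_derivative_convex H1 H2 H3 H4 H5 t ab.
by rewrite !convRE.
Qed.

Lemma psi_concave (phi : R -> R) (beta bp : R) :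
  (forall x, derivable phi x 1) -> (forall x, derivable (derive1 phi) x 1) ->
  0 < bp -> bp <= beta ->
  (forall x, `|x| <= 1 -> derive1 phi x ^+ 2 <= bp * derive1n 2 phi x) ->
  forall u v t : R, -1 <= u <= 1 -> -1 <= v <= 1 -> 0 <= t <= 1 ->
  t * expR (- phi u / beta) + (1 - t) * expR (- phi v / beta) <=
  expR (- phi (t * u + (1 - t) * v) / beta).
Proof.
move=> d1 d2 bp0 bpb hc u v t /andP[u0 u1] /andP[v0 v1] /andP[t0 t1].
have [uv|vu] := leP u v.
  have := @psi_concave_aux phi beta bp d1 d2 bp0 bpb hc u v u0 v1 uv (Itv01 t0 t1).
  by rewrite /= !mulrN -opprD lerN2.
have t0' : 0 <= 1 - t by lra.
have t1' : 1 - t <= 1 by lra.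
have := @psi_concave_aux phi beta bp d1 d2 bp0 bpb hc v u v0 u1 (ltW vu) (Itv01 t0' t1').
rewrite /= !mulrN -opprD lerN2 (_ : 1 - (1 - t) = t); last by lra.
by rewrite addrC [X in _ <= expR (- phi X / _)]addrC.
Qed.
End Calc.
Section Jensen.
Context {R : realType}.
Lemma jensen_fin (S : R -> Prop) (g : R -> R) :
  (forall x y t, S x -> S y -> 0 <= t <= 1 -> S (t * x + (1 - t) * y)) ->
  (forall x y t, S x -> S y -> 0 <= t <= 1 ->
     g (t * x + (1 - t) * y) <= t * g x + (1 - t) * g y) ->
  forall k (w x : 'I_k -> R), (forall i, 0 <= w i) -> \sum_(i < k) w i = 1 ->
  (forall i, S (x i)) ->
  S (\sum_(i < k) w i * x i) /\ g (\sum_(i < k) w i * x i) <= \sum_(i < k) w i * g (x i).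
Proof.
move=> Sc gc; elim=> [|k IH] w x w0 w1 Sx.
  by move: w1; rewrite big_ord0 => /eqP; rewrite eq_sym oner_eq0.
move: w1; rewrite !big_ord_recl => w1.
set s := \sum_(i < k) w (lift ord0 i).
have s0 : 0 <= s by apply: sumr_ge0 => i _.
have [s_eq0|s_gt0] := eqVneq s 0.
  have wi0 i : w (lift ord0 i) = 0.
    by move/eqP: s_eq0; rewrite psumr_eq0 // => /allP/(_ i (mem_index_enum _)) /= /eqP.
  have -> : \sum_(i < k) w (lift ord0 i) * x (lift ord0 i) = 0.
    by apply: big1 => i _; rewrite wi0 mul0r.
  have -> : \sum_(i < k) w (lift ord0 i) * g (x (lift ord0 i)) = 0.
    by apply: big1 => i _; rewrite wi0 mul0r.
  have -> : w ord0 = 1 by move: w1; rewrite -/s s_eq0 addr0.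
  by rewrite !mul1r !addr0; split.
have sp : 0 < s by rewrite lt_neqAle eq_sym s_gt0 s0.
pose w' i := w (lift ord0 i) / s.
have w'0 i : 0 <= w' i by rewrite /w' divr_ge0.
have w'1 : \sum_(i < k) w' i = 1 by rewrite /w' -mulr_suml divff.
have [Sy gy] := IH w' (fun i => x (lift ord0 i)) w'0 w'1 (fun i => Sx _).
set y := \sum_(i < k) w' i * x (lift ord0 i) in Sy gy.
have ey : \sum_(i < k) w (lift ord0 i) * x (lift ord0 i) = (1 - w ord0) * y.
  rewrite /y mulr_sumr (_ : 1 - w ord0 = s); last by rewrite -w1 addrC addKr.
  by apply: eq_bigr => i _; rewrite /w' mulrA mulrCA mulfV ?mulr1 // gt_eqF.
have ws : 1 - w ord0 = s by rewrite -w1 addrC addKr.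
have t01 : 0 <= w ord0 <= 1 by rewrite w0 /= -subr_ge0 ws.
rewrite ey; split; first exact: Sc.
apply: le_trans (gc _ _ _ (Sx _) Sy t01) _.
rewrite lerD2l ws.
have -> : \sum_(i < k) w (lift ord0 i) * g (x (lift ord0 i)) =
          s * \sum_(i < k) w' i * g (x (lift ord0 i)).
  rewrite mulr_sumr; apply: eq_bigr => i _.
    by rewrite /w' mulrA mulrCA mulfV ?mulr1 // gt_eqF.
by apply: ler_wpM2l.
Qed.
End Jensen.
Section AggJensen.
Context {R : realType} {d : measure_display} {T : measurableType d}.
Variables (phi : R -> R) (M : nat) (h : 'I_M -> T -> R) (beta : R).
Hypothesis phi_convex : forall (x y t : R), 0 <= t <= 1 ->
      phi (t * x + (1 - t) * y) <= t * phi x + (1 - t) * phi y.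

Lemma agg_jensen n (hn : (0 < n)%N) s (y : bool) (x : T) :
  phi (- lab y * h_agg phi h beta n s x) <=
  \sum_(i < n) n%:R^-1 * phi (- lab y * \sum_(j < M) theta_w phi h beta (take i s) j * h j x).
Proof.
pose X i := - lab y * \sum_(j < M) theta_w phi h beta (take i s) j * h j x.
have e : - lab y * h_agg phi h beta n s x = \sum_(i < n) n%:R^-1 * X i.
  rewrite /h_agg /theta_hat /X.
  transitivity (\sum_(i < n) \sum_(j < M) - lab y * (n%:R^-1 * (theta_w phi h beta (take i s) j * h j x))).
    rewrite exchange_big mulr_sumr; apply: eq_bigr => j _.
    by rewrite -mulr_sumr -mulr_sumr -mulr_suml [in RHS](mulrA (n%:R^-1)).
  apply: eq_bigr => i _; rewrite mulr_sumr mulr_sumr; apply: eq_bigr => j _.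
  by rewrite mulrCA.
rewrite e.
have n0 : (n%:R : R) != 0 by rewrite pnatr_eq0 -lt0n.
have w1 : \sum_(i < n) (n%:R : R)^-1 = 1.
  by rewrite sumr_const card_ord -[(n%:R)^-1 *+ n]mulr_natr mulVf.
have w0 : forall i : 'I_n, 0 <= (n%:R : R)^-1 by move=> _; rewrite invr_ge0 ler0n.
have [_ J] := @jensen_fin R (fun _ => True) phi (fun _ _ _ _ _ _ => I)
  (fun x y t _ _ ht => phi_convex x y t ht) n (fun _ => n%:R^-1) X
  w0 w1 (fun _ => I).
exact: J.
Qed.
End AggJensen.
Section Pointwise.
Context {R : realType} {d : measure_display} {T : measurableType d}.
Variables (phi : R -> R) (M : nat) (h : 'I_M -> T -> R) (beta bp : R).
Hypothesis hM : (0 < M)%N.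
Hypothesis h_range : forall j x, -1 <= h j x <= 1.
Hypothesis phi_d1 : forall x, derivable phi x 1.
Hypothesis phi_d2 : forall x, derivable (derive1 phi) x 1.
Hypothesis bp0 : 0 < bp.
Hypothesis bpb : bp <= beta.
Hypothesis phi_cond : forall x, `|x| <= 1 -> derive1 phi x ^+ 2 <= bp * derive1n 2 phi x.

Let b0 : 0 < beta. Proof. exact: lt_le_trans bpb. Qed.

Definition Qt (z : T * bool) (th : 'I_M -> R) : R :=
  phi (- lab z.2 * \sum_(j < M) th j * h j z.1).

Definition Wt (s : seq (T * bool)) : R := \sum_(k < M) expR (- zeta phi h s k / beta).

Lemma Wt_gt0 s : 0 < Wt s.
Proof.
rewrite /Wt (bigD1 (Ordinal hM)) //=; apply: ltr_pwDl; first exact: expR_gt0.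
by apply: sumr_ge0 => i _; exact: ltW (expR_gt0 _).
Qed.

Lemma theta_w_ge0 s j : 0 <= theta_w phi h beta s j.
Proof. by rewrite /theta_w divr_ge0 // ?ltW ?expR_gt0 // (Wt_gt0 s). Qed.

Lemma theta_w_sum1 s : \sum_(j < M) theta_w phi h beta s j = 1.
Proof.
rewrite /theta_w -mulr_suml; have := Wt_gt0 s; rewrite /Wt => W0.
by rewrite divff // gt_eqF.
Qed.

Lemma lab_pm1 (b : bool) : (lab b : R) = 1 \/ (lab b : R) = -1.
Proof. by case: b; [left|right]. Qed.

Lemma u_range (z : T * bool) j : -1 <= - lab z.2 * h j z.1 <= 1.
Proof.
have := h_range j z.1; case: (lab_pm1 z.2) => ->; move=> /andP[a b]; apply/andP; split; lra.
Qed.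

Lemma zeta_rcons s z j : zeta phi h (rcons s z) j = zeta phi h s j + lossj phi h j z.
Proof. by rewrite /zeta big_rcons. Qed.

Lemma one_step (p : seq (T * bool)) (z : T * bool) :
  Qt z (theta_w phi h beta p) <= beta * (ln (Wt p) - ln (Wt (rcons p z))).
Proof.
set th := theta_w phi h beta p.
pose u j := - lab z.2 * h j z.1.
pose S := fun x : R => -1 <= x <= 1.
have Sc : forall x y t, S x -> S y -> 0 <= t <= 1 -> S (t * x + (1 - t) * y).
  move=> x y t /andP[x0 x1] /andP[y0 y1] /andP[t0 t1]; rewrite /S.
  apply/andP; split; nra.
pose g := fun x => - expR (- phi x / beta).
have gc : forall x y t, S x -> S y -> 0 <= t <= 1 ->
     g (t * x + (1 - t) * y) <= t * g x + (1 - t) * g y.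
  move=> x y t Sx Sy Ht; rewrite /g !mulrN -opprD lerN2.
  exact: (@psi_concave R phi beta bp phi_d1 phi_d2 bp0 bpb phi_cond x y t Sx Sy Ht).
have [_ J] := @jensen_fin R (fun x => S x) g Sc gc M th u (theta_w_ge0 p) (theta_w_sum1 p) (fun j => u_range z j).
have eu : \sum_(j < M) th j * u j = - lab z.2 * \sum_(j < M) th j * h j z.1.
  by rewrite mulr_sumr; apply: eq_bigr => j _; rewrite /u mulrCA.
rewrite eu in J.
have key : Wt (rcons p z) / Wt p <= expR (- Qt z th / beta).
  move: J; rewrite /g [X in _ <= X](eq_bigr (fun j => - (th j * expR (- phi (u j) / beta)))); last first.
    by move=> j _; rewrite /= mulrN.
  rewrite sumrN lerN2 /Qt => J; apply: le_trans J.
  rewrite /Wt mulr_suml le_eqVlt; apply/orP; left; apply/eqP; apply: eq_bigr => j _.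
  rewrite /th /theta_w zeta_rcons /u /lossj -/(Wt p).
  by rewrite -mulrA mulrCA mulrC -expRD; congr (_ * expR _); rewrite opprD mulrDl.
have Wp := Wt_gt0 p; have Wr := Wt_gt0 (rcons p z).
have := key; rewrite -ler_ln ?posrE ?expR_gt0 ?divr_gt0 // expRK lnM ?posrE ?invr_gt0 // lnV ?posrE //.
move=> H.
have : Qt z th / beta <= ln (Wt p) - ln (Wt (rcons p z)) by lra.
by rewrite ler_pdivrMr // mulrC.
Qed.


Lemma telescope (z0 : T * bool) s :
  \sum_(i < size s) Qt (nth z0 s i) (theta_w phi h beta (take i s)) <=
  beta * (ln (Wt [::]) - ln (Wt s)).
Proof.
elim/last_ind: s => [|s z IH]; first by rewrite big_ord0 subrr mulr0.
rewrite size_rcons big_ord_recr /= nth_rcons ltnn eqxx -cats1 take_size_cat //.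
rewrite (eq_bigr (fun i : 'I_(size s) => Qt (nth z0 s i) (theta_w phi h beta (take i s)))); last first.
  by move=> i _; rewrite nth_cat ltn_ord takel_cat // ltnW.
rewrite cats1; apply: le_trans (lerD IH (one_step s z)) _.
by rewrite -mulrDr subrKA.
Qed.

Lemma pointwise_bound (z0 : T * bool) s j :
  \sum_(i < size s) Qt (nth z0 s i) (theta_w phi h beta (take i s)) <=
  beta * ln M%:R + \sum_(i < size s) lossj phi h j (nth z0 s i).
Proof.
apply: le_trans (telescope z0 s) _.
have -> : Wt [::] = M%:R.
  rewrite /Wt (eq_bigr (fun _ => 1)); last by move=> k _; rewrite /zeta big_nil oppr0 mul0r expR0.
  by rewrite sumr_const card_ord.
have ez : zeta phi h s j = \sum_(i < size s) lossj phi h j (nth z0 s i).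
  by rewrite /zeta (big_nth z0) big_mkord.
rewrite -ez mulrBr lerD2l.
have Ws : expR (- zeta phi h s j / beta) <= Wt s.
  rewrite /Wt (bigD1 j) //= lerDl; apply: sumr_ge0 => i _; exact: ltW (expR_gt0 _).
have := Ws; rewrite -ler_ln ?posrE ?expR_gt0 ?Wt_gt0 // expRK => H.
  move: H; rewrite ler_pdivrMr // mulrC => H; lra.
Qed.
End Pointwise.
Section Meas.
Context {R : realType} {dA : measure_display} {A : measurableType dA} (P : probability A R).

Fixpoint tupD (k : nat) : measure_display :=
  match k with 0 => default_measure_display | k.+1 => measure_prod_display (dA, tupD k) end.

Fixpoint tup (k : nat) : measurableType (tupD k) :=
  match k with 0 => unit | k.+1 => (A * tup k)%type end.

Fixpoint tos (k : nat) : tup k -> seq A :=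
  match k with 0 => fun _ => [::] | k.+1 => fun t => t.1 :: tos k t.2 end.

Lemma size_tos k t : size (tos k t) = k.
Proof. by elim: k t => //= k IH t; rewrite IH. Qed.

Lemma iter_expect_ge0 k f : (forall s, (0 <= f s)%E) -> (0 <= iter_expect P k f)%E.
Proof.
elim: k f => [|k IH] f f0 //=.
by apply: integral_ge0 => z _; apply: IH.
Qed.

Lemma iter_expect_ext k f g : (forall s, size s = k -> f s = g s) ->
  iter_expect P k f = iter_expect P k g.
Proof.
elim: k f g => [|k IH] f g fg /=; first exact: fg.
by apply: eq_integral => z _; apply: IH => s hs; apply: fg; rewrite /= hs.
Qed.

Lemma meas_iter k : forall dX (X : measurableType dX) (F : X -> seq A -> \bar R),
  measurable_fun setT (fun p : X * tup k => F p.1 (tos k p.2)) ->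
  (forall x s, (0 <= F x s)%E) ->
  measurable_fun setT (fun x => iter_expect P k (F x)).
Proof.
elim: k => [|k IH] dX X F mF F0 /=.
  have -> : (fun x => F x [::]) = (fun p : X * tup 0 => F p.1 (tos 0 p.2)) \o (fun x => (x, tt)).
    by [].
  by apply: measurableT_comp => //; exact: pair2_measurable.
pose G := fun xz : X * A => iter_expect P k (fun s => F xz.1 (xz.2 :: s)).
have mG : measurable_fun setT G.
  apply: (IH _ (X * A)%type (fun xz s => F xz.1 (xz.2 :: s))); last by move=> *; exact: F0.
  have -> : (fun p : (X * A) * tup k => F p.1.1 (p.1.2 :: tos k p.2)) =
     (fun p : X * tup k.+1 => F p.1 (tos k.+1 p.2)) \o (fun q : (X * A) * tup k => (q.1.1, (q.1.2, q.2))).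
    by [].
  apply: measurableT_comp => //.
  apply: measurable_fun_pair.
    exact: measurableT_comp measurable_fst measurable_fst.
  apply: measurable_fun_pair => //.
  exact: measurableT_comp measurable_snd measurable_fst.
have G0 : forall xz, (0 <= G xz)%E by move=> xz; apply: iter_expect_ge0 => s; exact: F0.
exact: (measurable_fun_fubini_tonelli_F (m2 := P) G mG G0).
Qed.


Lemma meas_section k (f : seq A -> \bar R) (z : A) :
  measurable_fun setT (fun t : tup k.+1 => f (tos k.+1 t)) ->
  measurable_fun setT (fun t : tup k => f (z :: tos k t)).
Proof.
move=> mf.
have -> : (fun t : tup k => f (z :: tos k t)) = (fun t : tup k.+1 => f (tos k.+1 t)) \o (pair z) by [].
by apply: measurableT_comp => //; exact: pair1_measurable.
Qed.

Lemma meas_iter1 k (f : seq A -> \bar R) :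
  measurable_fun setT (fun t : tup k.+1 => f (tos k.+1 t)) -> (forall s, (0 <= f s)%E) ->
  measurable_fun setT (fun z => iter_expect P k (fun s => f (z :: s))).
Proof.
move=> mf f0.
exact: (@meas_iter k _ A (fun z s => f (z :: s)) mf (fun z s => f0 _)).
Qed.

Lemma iter_expectD k (f g : seq A -> \bar R) :
  (forall s, (0 <= f s)%E) -> (forall s, (0 <= g s)%E) ->
  measurable_fun setT (fun t : tup k => f (tos k t)) ->
  measurable_fun setT (fun t : tup k => g (tos k t)) ->
  iter_expect P k (fun s => f s + g s)%E = (iter_expect P k f + iter_expect P k g)%E.
Proof.
elim: k f g => [|k IH] f g f0 g0 mf mg //=.
rewrite -ge0_integralD //; last 4 first.
- by move=> z _; apply: iter_expect_ge0.
- exact: meas_iter1.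
- by move=> z _; apply: iter_expect_ge0.
- exact: meas_iter1.
apply: eq_integral => z _; apply: IH => //; exact: meas_section.
Qed.

Lemma iter_expect_le k (f g : seq A -> \bar R) :
  (forall s, (0 <= f s)%E) -> (forall s, (0 <= g s)%E) ->
  measurable_fun setT (fun t : tup k => f (tos k t)) ->
  measurable_fun setT (fun t : tup k => g (tos k t)) ->
  (forall s, size s = k -> (f s <= g s)%E) ->
  (iter_expect P k f <= iter_expect P k g)%E.
Proof.
elim: k f g => [|k IH] f g f0 g0 mf mg fg /=; first exact: fg.
apply: ge0_le_integral => //.
- by move=> z _; apply: iter_expect_ge0.
- exact: meas_iter1.
- exact: meas_iter1.
move=> z _; apply: IH => //; try exact: meas_section.
by move=> s hs; apply: fg; rewrite /= hs.
Qed.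

Lemma iter_expect_split m k f :
  iter_expect P (m + k) f = iter_expect P m (fun p => iter_expect P k (fun s => f (p ++ s))).
Proof.
elim: m f => [|m IH] f //=.
apply: eq_integral => z _; exact: IH.
Qed.

Lemma iter_expect_cst k c : iter_expect P k (fun _ => c) = c.
Proof.
elim: k => [|k IH] //=.
rewrite IH integral_cst // -[X in _ = X]mule1; congr (_ * _)%E; exact: probability_setT.
Qed.

Lemma iter_expect_head (z0 : A) k g :
  iter_expect P k.+1 (fun s => g (head z0 s)) = (\int[P]_z g z)%E.
Proof. by rewrite /=; apply: eq_integral => z _; rewrite iter_expect_cst. Qed.

Lemma iter_expect_last (z0 : A) k g :
  iter_expect P k.+1 (fun s => g (last z0 s)) = (\int[P]_z g z)%E.
Proof.
elim: k z0 => [|k IH] z0; first by [].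
transitivity (\int[P]_z iter_expect P k.+1 (fun s => g (last z s)))%E; first by [].
under eq_integral => z _ do rewrite (IH z).
rewrite integral_cst // -[X in _ = X]mule1; congr (_ * _)%E; exact: probability_setT.
Qed.

Lemma iter_expect_sum k m (f : 'I_m -> seq A -> R) :
  (forall i s, 0 <= f i s) ->
  (forall i, measurable_fun setT (fun t : tup k => f i (tos k t))) ->
  iter_expect P k (fun s => (\sum_(i < m) f i s)%:E) =
  (\sum_(i < m) iter_expect P k (fun s => (f i s)%:E))%E.
Proof.
elim: m f => [|m IH] f f0 mf.
  rewrite big_ord0 (iter_expect_ext _ _ (fun _ => 0%E)); last by move=> s _; rewrite big_ord0.
  exact: iter_expect_cst.
rewrite big_ord_recr /= -(IH (fun i => f (widen_ord (leqnSn m) i))) //.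
rewrite -iter_expectD //.
- by apply: iter_expect_ext => s _; rewrite big_ord_recr /= EFinD.
- by move=> s; rewrite lee_fin; apply: sumr_ge0 => i _.
- by move=> s; rewrite lee_fin.
- apply/measurable_EFinP; exact: measurable_sum.
- by apply/measurable_EFinP.
Qed.

Lemma iter_expect_ltake (z0 : A) n i (H : seq A -> A -> R) : (i < n)%N ->
  iter_expect P n (fun s => (H (take i s) (last z0 s))%:E) =
  iter_expect P i (fun p => \int[P]_z (H p z)%:E)%E.
Proof.
move=> lt_in; rewrite -(subnKC (ltnW lt_in)) iter_expect_split.
apply: iter_expect_ext => p hp.
case hk: (n - i)%N => [|k]; first by move: lt_in; rewrite -subn_gt0 hk.
rewrite -(iter_expect_last z0 k).
apply: iter_expect_ext => s hs.
rewrite -hp take_size_cat // last_cat.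
by case: s hs => // y s' _.
Qed.

Lemma iter_expect_ntake (z0 : A) n i (H : seq A -> A -> R) : (i < n)%N ->
  iter_expect P n (fun s => (H (take i s) (nth z0 s i))%:E) =
  iter_expect P i (fun p => \int[P]_z (H p z)%:E)%E.
Proof.
move=> lt_in; rewrite -(subnKC (ltnW lt_in)) iter_expect_split.
apply: iter_expect_ext => p hp.
case hk: (n - i)%N => [|k]; first by move: lt_in; rewrite -subn_gt0 hk.
rewrite -(iter_expect_head z0 k).
apply: iter_expect_ext => s hs.
by rewrite -hp take_size_cat // nth_cat ltnn subnn nth0.
Qed.

Lemma meas_nth (z0 : A) k m :
  measurable_fun setT (fun t : tup k => nth z0 (tos k t) m).
Proof.
elim: k m => [|k IH] m /=; first exact: measurable_cst.
case: m => [|m] /=; first exact: measurable_fst.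
exact: (measurableT_comp (IH m) measurable_snd).
Qed.

Lemma meas_sum_take (g : A -> R) : measurable_fun setT g ->
  forall k i, measurable_fun setT (fun t : tup k => \sum_(z <- take i (tos k t)) g z).
Proof.
move=> mg; elim=> [|k IH] i /=.
  by rewrite (_ : (fun _ => _) = fun _ => 0) ?big_nil //; exact: measurable_cst.
case: i => [|i] /=.
  by rewrite (_ : (fun _ => _) = fun _ => 0); [exact: measurable_cst|apply/funext => t; rewrite big_nil].
rewrite (_ : (fun _ => _) = (fun t : tup k.+1 => g t.1 + \sum_(z <- take i (tos k t.2)) g z)); last first.
  by apply/funext => t; rewrite big_cons.
apply: measurable_funD; first exact: measurableT_comp mg measurable_fst.
exact: (measurableT_comp (IH i) measurable_snd).
Qed.

End Meas.

Section SpecMeas.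
Context {R : realType} {d : measure_display} {T : measurableType d}.
Variables (phi : R -> R) (M : nat) (h : 'I_M -> T -> R) (beta : R).
Hypothesis h_meas : forall j, measurable_fun setT (h j).
Hypothesis mphi : measurable_fun setT phi.

Local Notation A := (T * bool)%type.

Lemma meas_lab : measurable_fun setT (fun z : A => (lab z.2 : R)).
Proof.
apply: (measurableT_comp (f := fun b : bool => (lab b : R))) => //.
Qed.

Lemma meas_u (g : A -> A) (j : 'I_M) : measurable_fun setT g ->
  measurable_fun setT (fun x => - lab (g x).2 * h j (g x).1 : R).
Proof.
move=> mg; apply: measurable_funM.
  apply: measurable_funN; exact: (measurableT_comp meas_lab mg).
apply: (measurableT_comp (h_meas j)); exact: (measurableT_comp measurable_fst mg).
Qed.

Lemma meas_lossj j : measurable_fun setT (lossj phi h j).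
Proof.
have -> : lossj phi h j = phi \o (fun z : A => - lab z.2 * h j z.1) by [].
by apply: measurableT_comp => //; apply: (meas_u id j); exact: measurable_id. Qed.


Lemma meas_zeta k i j :
  measurable_fun setT (fun t : tup k => zeta phi h (take i (tos k t)) j).
Proof. exact: (@meas_sum_take R _ A (lossj phi h j) (meas_lossj j) k i). Qed.

Lemma meas_inv_pos dX (X : measurableType dX) (f : X -> R) :
  measurable_fun setT f -> (forall x, 0 < f x) ->
  measurable_fun setT (fun x => (f x)^-1).
Proof.
move=> mf fp.
rewrite (_ : (fun x => _) = expR \o (fun x => - ln (f x))); last first.
  by apply/funext => x /=; rewrite expRN lnK // posrE.
apply: measurableT_comp; first exact: measurable_expR.
apply: measurable_funN; apply: measurableT_comp => //; exact: measurable_ln.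
Qed.

Hypothesis hM : (0 < M)%N.

Lemma meas_theta k i j :
  measurable_fun setT (fun t : tup k => theta_w phi h beta (take i (tos k t)) j).
Proof.
rewrite /theta_w; apply: measurable_funM.
  apply: measurableT_comp; first exact: measurable_expR.
  apply: measurable_funM; last exact: measurable_cst.
  apply: measurable_funN; exact: meas_zeta.
apply: meas_inv_pos.
  apply: measurable_sum => l; apply: measurableT_comp; first exact: measurable_expR.
  apply: measurable_funM; last exact: measurable_cst.
  apply: measurable_funN; exact: meas_zeta.
move=> t; rewrite (bigD1 (Ordinal hM)) //=; apply: ltr_pwDl; first exact: expR_gt0.
by apply: sumr_ge0 => l _; exact: ltW (expR_gt0 _).
Qed.

Lemma meas_Qt (z0 : A) k m i :
  measurable_fun setT (fun t : tup k =>
    phi (- lab (nth z0 (tos k t) m).2 *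
      \sum_(j < M) theta_w phi h beta (take i (tos k t)) j * h j (nth z0 (tos k t) m).1)).
Proof.
apply: (measurableT_comp mphi); apply: measurable_funM.
  apply: measurable_funN; exact: (measurableT_comp meas_lab (meas_nth z0 k m)).
apply: measurable_sum => j; apply: measurable_funM; first exact: meas_theta.
apply: (measurableT_comp (h_meas j)); exact: (measurableT_comp measurable_fst (meas_nth z0 k m)).
Qed.

Lemma meas_loss_nth (z0 : A) k m j :
  measurable_fun setT (fun t : tup k => lossj phi h j (nth z0 (tos k t) m)).
Proof. exact: (measurableT_comp (meas_lossj j) (meas_nth z0 k m)). Qed.

Lemma meas_agg (z0 : A) n : (0 < n)%N ->
  measurable_fun setT (fun t : tup n => agg_loss phi h beta n (tos n t)).
Proof.
move=> n0.
rewrite (_ : (fun t => _) = (fun t : tup n =>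
   phi (- lab (nth z0 (tos n t) n.-1).2 * \sum_(j < M) (n%:R^-1 *
      \sum_(i < n) theta_w phi h beta (take i (tos n t)) j) * h j (nth z0 (tos n t) n.-1).1))); last first.
  apply/funext => t; have := size_tos n t; case: (tos n t) => [|z s'] /=.
    by move=> e; move: n0; rewrite -e.
  move=> e; rewrite /h_agg /theta_hat -e /= nth_last /=; done.
apply: (measurableT_comp mphi); apply: measurable_funM.
  apply: measurable_funN; exact: (measurableT_comp meas_lab (meas_nth z0 n _)).
apply: measurable_sum => j; apply: measurable_funM.
  apply: measurable_funM; first exact: measurable_cst.
  apply: measurable_sum => i; exact: meas_theta.
apply: (measurableT_comp (h_meas j)); exact: (measurableT_comp measurable_fst (meas_nth z0 n _)).
Qed.

End SpecMeas.

Theorem corollary5p3 (R : realType) (d : measure_display) (T : measurableType d)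
  (P : probability (T * bool)%type R)
  (M : nat) (hM : (2 <= M)%N)
  (h : 'I_M -> T -> R)
  (h_meas : forall j, measurable_fun setT (h j))
  (h_range : forall j x, -1 <= h j x <= 1)
  (phi : R -> R)
  (phi_ge0 : forall x, 0 <= phi x)
  (phi_convex : forall (x y t : R), 0 <= t <= 1 ->
      phi (t * x + (1 - t) * y) <= t * phi x + (1 - t) * phi y)
  (phi_d1 : forall x, derivable phi x 1)
  (phi_d2 : forall x, derivable (derive1 phi) x 1)
  (beta_phi : R) (beta_phi_gt0 : 0 < beta_phi)
  (phi_cond : forall x, `|x| <= 1 ->
      (derive1 phi x) ^+ 2 <= beta_phi * derive1n 2 phi x)
  (beta : R) (hbeta : beta_phi <= beta)
  (n : nat) (hn : (0 < n)%N) :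
  (iter_expect P n (fun s => (agg_loss phi h beta n s)%:E)
   <= \big[mine/+oo]_(j < M) (\int[P]_z (phi (- lab z.2 * h j z.1))%:E)
      + (beta * ln M%:R / n%:R)%:E)%E.
Proof.
have [z0 _] : exists z : T * bool, True.
  apply: contrapT => nz.
  have e : [set: T * bool] = set0.
    by apply/seteqP; split => z // _; apply: nz; exists z.
  have h1 : P setT = 1%E := probability_setT P.
  have h0 : P set0 = 0%E := measure0 P.
  by move: h1; rewrite e h0 => /eqP; rewrite eq_sym onee_eq0.
have b0 : 0 < beta by apply: lt_le_trans hbeta.
have hM0 : (0 < M)%N by apply: leq_trans hM.
have mphi : measurable_fun setT phi.
  apply: continuous_measurable_fun => x.
  by apply: differentiable_continuous; apply/derivable1_diffP; exact: phi_d1.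
set Ef := iter_expect P n _.
set c := beta * ln M%:R / n%:R.
have key : forall j : 'I_M,
    (Ef <= \int[P]_z (phi (- lab z.2 * h j z.1))%:E + c%:E)%E.
  move=> j.
  set Aj := (\int[P]_z (phi (- lab z.2 * h j z.1))%:E)%E.
  pose th p := theta_w phi h beta p.
  pose F1 (i : 'I_n) (s : seq (T * bool)) := n%:R^-1 * Qt phi M h (last z0 s) (th (take i s)).
  pose F2 (i : 'I_n) (s : seq (T * bool)) := n%:R^-1 * Qt phi M h (nth z0 s i) (th (take i s)).
  pose L (i : 'I_n) (s : seq (T * bool)) := n%:R^-1 * lossj phi h j (nth z0 s i).
  have ninv0 : 0 <= (n%:R : R)^-1 by rewrite invr_ge0 ler0n.
  have F1ge0 i s : 0 <= F1 i s by apply: mulr_ge0 => //; exact: phi_ge0.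
  have F2ge0 i s : 0 <= F2 i s by apply: mulr_ge0 => //; exact: phi_ge0.
  have Lge0 i s : 0 <= L i s by apply: mulr_ge0 => //; exact: phi_ge0.
  have lnM0 : 0 <= beta * ln M%:R by apply: mulr_ge0; [exact: ltW|apply: ln_ge0; rewrite ler1n].
  have mF2 i : measurable_fun setT (fun t : tup (A:=(T * bool)%type) n => F2 i (tos n t)).
    apply: measurable_funM; first exact: measurable_cst.
    exact: (meas_Qt phi M h beta h_meas mphi hM0 z0 n i i).
  have mF1 i : measurable_fun setT (fun t : tup (A:=(T * bool)%type) n => F1 i (tos n t)).
    rewrite (_ : (fun t => _) = (fun t : tup (A:=(T * bool)%type) n => n%:R^-1 *
        Qt phi M h (nth z0 (tos n t) n.-1) (th (take i (tos n t))))); last first.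
      by apply/funext => t; rewrite /F1 -nth_last size_tos.
    apply: measurable_funM; first exact: measurable_cst.
    exact: (meas_Qt phi M h beta h_meas mphi hM0 z0 n n.-1 i).
  have mL i : measurable_fun setT (fun t : tup (A:=(T * bool)%type) n => L i (tos n t)).
    apply: measurable_funM; first exact: measurable_cst.
    exact: (meas_loss_nth phi M h h_meas mphi z0 n i j).
  have s1 : (Ef <= iter_expect P n (fun s => (\sum_(i < n) F1 i s)%:E))%E.
    apply: iter_expect_le.
    - move=> s; rewrite lee_fin; case: s => [|z s] //=; exact: phi_ge0.
    - by move=> s; rewrite lee_fin; apply: sumr_ge0 => i _.
    - apply/measurable_EFinP; exact: (meas_agg phi M h beta h_meas mphi hM0 z0 n hn).
    - by apply/measurable_EFinP; apply: measurable_sum => i; exact: mF1.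
    - move=> s hs; rewrite lee_fin; case: s hs => [|z s] hs; first by rewrite -hs in hn.
      exact: (agg_jensen phi M h beta phi_convex n hn (z :: s) (last z s).2 (last z s).1).
  have s2 := iter_expect_sum P n n F1 F1ge0 mF1.
  have s3 : forall i : 'I_n, iter_expect P n (fun s => (F1 i s)%:E) = iter_expect P n (fun s => (F2 i s)%:E).
    move=> i.
    have e1 := iter_expect_ltake P z0 n i (fun p z => n%:R^-1 * Qt phi M h z (th p)) (ltn_ord i).
    have e2 := iter_expect_ntake P z0 n i (fun p z => n%:R^-1 * Qt phi M h z (th p)) (ltn_ord i).
    simpl in e1, e2.
    by rewrite /F1 /F2 e1 e2.
  have s4 := esym (iter_expect_sum P n n F2 F2ge0 mF2).
  have s5 : (iter_expect P n (fun s => (\sum_(i < n) F2 i s)%:E) <=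
      iter_expect P n (fun s => (n%:R^-1 * (beta * ln M%:R) + \sum_(i < n) L i s)%:E))%E.
    apply: iter_expect_le.
    - by move=> s; rewrite lee_fin; apply: sumr_ge0 => i _.
    - move=> s; rewrite lee_fin; apply: addr_ge0; first exact: mulr_ge0.
      by apply: sumr_ge0 => i _.
    - by apply/measurable_EFinP; apply: measurable_sum => i; exact: mF2.
    - apply/measurable_EFinP; apply: measurable_funD; first exact: measurable_cst.
      by apply: measurable_sum => i; exact: mL.
    - move=> s hs; rewrite lee_fin /F2 /L -!mulr_sumr -mulrDr ler_wpM2l //.
      have := pointwise_bound phi M h beta beta_phi hM0 h_range phi_d1 phi_d2
        beta_phi_gt0 hbeta phi_cond z0 s j.
      by rewrite hs.
  have s6 : iter_expect P n (fun s => (n%:R^-1 * (beta * ln M%:R) + \sum_(i < n) L i s)%:E) =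
      ((n%:R^-1 * (beta * ln M%:R))%:E + \sum_(i < n) iter_expect P n (fun s => (L i s)%:E))%E.
    rewrite (iter_expect_ext P n _ (fun s => ((n%:R^-1 * (beta * ln M%:R))%:E + (\sum_(i < n) L i s)%:E)%E)); last first.
      by move=> s _; rewrite EFinD.
    rewrite iter_expectD.
    - by rewrite iter_expect_cst iter_expect_sum.
    - by move=> s; rewrite lee_fin; apply: mulr_ge0.
    - by move=> s; rewrite lee_fin; apply: sumr_ge0 => i _.
    - exact: measurable_cst.
    - by apply/measurable_EFinP; apply: measurable_sum => i; exact: mL.
  have s7 : forall i : 'I_n, iter_expect P n (fun s => (L i s)%:E) = ((n%:R^-1)%:E * Aj)%E.
    move=> i.
    have e := iter_expect_ntake P z0 n i (fun p z => n%:R^-1 * lossj phi h j z) (ltn_ord i).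
    simpl in e; rewrite /L e iter_expect_cst.
    under eq_integral => z _ do rewrite EFinM.
    rewrite ge0_integralZl //.
    - apply/measurable_EFinP; exact: (meas_lossj phi M h h_meas mphi j).
    - by move=> z _; rewrite lee_fin; exact: phi_ge0.
  have s8 : (\sum_(i < n) ((n%:R^-1)%:E * Aj) = Aj)%E.
    rewrite -ge0_sume_distrl; last by move=> i _; rewrite lee_fin.
    rewrite sumEFin sumr_const card_ord -[(n%:R)^-1 *+ n]mulr_natr mulVf ?mul1e //.
    by rewrite pnatr_eq0 -lt0n.
  apply: le_trans s1 _.
  rewrite s2 (eq_bigr _ (fun i _ => s3 i)) s4.
  apply: le_trans s5 _.
  rewrite s6 (eq_bigr _ (fun i _ => s7 i)) s8 addeC /c.
  by rewrite [_ * (beta * _)]mulrC.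
apply: (big_ind (fun v => Ef <= v + c%:E)%E).
- by rewrite addye // leey.
- by move=> x y hx hy; have [xy|yx] := leP x y.
- by move=> j _; exact: key.
Qed.
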